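(* Let $n\ge3$, $k\ge0$, and let $S\subseteq\mathrm{Inc}(A,B)$ be independent in $G_n^k$. If $S$ contains pairs $(a_1,y)$ and $(x,b_{k+2})$ with $a_1\preceq y\prec x\preceq b_{k+2}$, then $|B(a_1,S)|+|A(b_{k+2},S)|\le k+3-n$.
   Context: For integers $n\ge3$, $k\ge0$, the crown $S_n^k$ is the poset with ground set $A\cup B$, $A=\{a_1,\dots,a_{n+k}\}$, $B=\{b_1,\dots,b_{n+k}\}$, indices cyclic modulo $n+k$; elements of $A$ are pairwise incomparable, as are elements of $B$, and $a_i$ is incomparable to $b_j$ when $j\in\{i,\dots,i+k\}$ (mod $n+k$), while $a_i<b_j$ otherwise. $\mathrm{Inc}(A,B)$ is the set of pairs $(a,b)\in A\times B$ with $a$ incomparable to $b$; $G_n^k$ has vertex set $\mathrm{Inc}(A,B)$ with $(a,b)$ adjacent to $(x,y)$ iff $a<y$ and $x<b$. $B(a,S)=\{b:(a,b)\in S\}$, $A(b,S)=\{a:(a,b)\in S\}$. Circle conventions: points $u_1,\dots,u_{n+k}$ lie clockwise on a circle, with $a_i$ and $b_i$ both at $u_i$; a chain $p_1\,R_1\,p_2\cdots p_\ell$ with $R_j\in\{\prec,\preceq\}$ means travelling clockwise from the position of $p_1$ until first reaching the position of $p_\ell$ one meets the positions of $p_2,\dots,p_{\ell-1}$ in order, $\prec$ requiring distinct consecutive positions and $\preceq$ allowing equality. *)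

(* Defs.v *)
From mathcomp Require Import all_boot all_order all_algebra.
Unset Printing Implicit Defensive.

(* Crown S_n^k.  Index i : 'I_(n+k) (0-based) stands for a_(i+1) / b_(i+1),
   both located at circle position u_(i+1).  Clockwise = increasing index mod n+k. *)

Definition cwd (N p q : nat) : nat := (q + N - p) %% N.

Definition incomp (n k : nat) (i j : 'I_(n+k)) : bool := cwd (n+k) i j <= k.

Definition ltAB (n k : nat) (i j : 'I_(n+k)) : bool := ~~ incomp n k i j.

Definition Inc (n k : nat) : {set 'I_(n+k) * 'I_(n+k)} :=
  [set p | incomp n k p.1 p.2].

Definition adjG (n k : nat) (p q : 'I_(n+k) * 'I_(n+k)) : bool :=
  ltAB n k p.1 q.2 && ltAB n k q.1 p.2.

Definition independent (n k : nat) (S : {set 'I_(n+k) * 'I_(n+k)}) : bool :=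
  (S \subset Inc n k) && [forall p in S, forall q in S, ~~ adjG n k p q].

Definition Bset (n k : nat) (a : 'I_(n+k)) (S : {set 'I_(n+k) * 'I_(n+k)})
  : {set 'I_(n+k)} := [set b | (a, b) \in S].
Definition Aset (n k : nat) (b : 'I_(n+k)) (S : {set 'I_(n+k) * 'I_(n+k)})
  : {set 'I_(n+k)} := [set a | (a, b) \in S].

(* circle chain  p1 ⪯ p2 ≺ p3 ⪯ p4  (positions on a circle of N points):
   travelling clockwise from p1 until first reaching p4 one meets p2 then p3,
   with p2 and p3 distinct positions. *)
Definition chain_le_lt_le (N p1 p2 p3 p4 : nat) : bool :=
  [&& cwd N p1 p2 <= cwd N p1 p3, p2 != p3 & cwd N p1 p3 <= cwd N p1 p4].

(* Main.v *)
Require Import Defs.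
From mathcomp Require Import all_boot all_order all_algebra.
From mathcomp Require Import zify.
Import GRing.Theory Num.Theory.

Lemma card_int N lo hi : hi <= N -> #|[set i : 'I_N | lo <= i < hi]| = hi - lo.
Proof.
elim: hi => [|hi IH] hN.
  apply/eqP; rewrite cards_eq0; apply/eqP/setP => i; rewrite !inE; lia.
case: (ltnP hi lo) => Hl.
  have -> : hi.+1 - lo = 0 by lia.
  apply/eqP; rewrite cards_eq0; apply/eqP/setP => i; rewrite !inE; lia.
have hiN : hi < N by [].
have -> : [set i : 'I_N | lo <= i < hi.+1] = Ordinal hiN |: [set i : 'I_N | lo <= i < hi].
  apply/setP => i; rewrite !inE -val_eqE /=; lia.
rewrite cardsU1 IH ?(ltnW hN) // inE /= ltnn andbF /=; lia.
Qed.

Lemma cwd_le N p q : p <= q -> q < N -> cwd N p q = q - p.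
Proof.
move=> pq qN; rewrite /cwd.
have -> : q + N - p = (q - p) + N by lia.
rewrite modnDr modn_small //; lia.
Qed.

Lemma cwd_gt N p q : q < p -> p < N -> cwd N p q = q + N - p.
Proof. move=> pq qN; rewrite /cwd modn_small //; lia. Qed.

Lemma count_main (N k n : nat) (Bs As : {set 'I_N}) (b a : 'I_N) :
  (forall i : 'I_N, i \in Bs -> i <= k) -> (forall i : 'I_N, i \in As -> 0 < i <= k.+1) ->
  b \in Bs -> a \in As -> b < a -> n <= a - b -> 1 < n -> k.+1 < N ->
  (forall i j : 'I_N, i \in Bs -> j \in As -> i < j -> a - b <= j - i) ->
  #|Bs| + #|As| + n <= k + 3.
Proof.
move=> hB hA Hb Ha Hba nab n1 kN Hgap.
have N0 : 0 < N by lia.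
pose h := fun i : 'I_N => Ordinal (ltn_pmod (i + N.-1) N0).
have hval : forall i : 'I_N, 0 < i -> val (h i) = i.-1.
  move=> i Hi; rewrite /=.
  have iN := ltn_ord i.
  have -> : i + N.-1 = i.-1 + N by lia.
  by rewrite modnDr modn_small //; lia.
have hinj : {in As &, injective h}.
  move=> i j Hi Hj /(congr1 val).
  move: (hA _ Hi) (hA _ Hj) => /andP[Hi' _] /andP[Hj' _].
  rewrite !hval // => E; apply/val_inj => /=; lia.
have cH : #|h @: As| = #|As| by exact: (card_in_imset hinj).
have hbk' := hB b Hb. have hak := hA a Ha.
have aN := ltn_ord a.
have cG : #|[set i : 'I_N | b.+1 <= i < a.-1]| = a.-1 - b.+1 by rewrite card_int //; lia.
have cW : #|[set i : 'I_N | 0 <= i < k.+1]| = k.+1 by rewrite card_int; lia.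
have inH : forall i, i \in h @: As -> exists2 j, j \in As & nat_of_ord i = j.-1.
  move=> i /imsetP[j Hj ->]; exists j => //; rewrite hval //; by case/andP: (hA _ Hj).
have d1 : Bs :&: (h @: As) = set0.
  apply/setP => i; rewrite !inE; apply/negbTE/negP => /andP[Hi /inH[j Hj Ej]].
  have h2 := hA _ Hj; have h1 := hB _ Hi.
  have Hij : i < j by lia.
  have := Hgap i j Hi Hj Hij; lia.
have d2 : (Bs :|: (h @: As)) :&: [set i : 'I_N | b.+1 <= i < a.-1] = set0.
  apply/setP => i; rewrite !inE; apply/negbTE/negP => /andP[/orP[Hi|/inH[j Hj Ej]] Hg].
    have Hia : i < a by lia.
    have := Hgap i a Hi Ha Hia; lia.
  have Hbj : b < j by lia.
  have := Hgap b j Hb Hj Hbj; lia.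
have sub : (Bs :|: (h @: As)) :|: [set i : 'I_N | b.+1 <= i < a.-1] \subset [set i : 'I_N | 0 <= i < k.+1].
  apply/subsetP => i; rewrite !inE => /orP[/orP[Hi|/inH[j Hj Ej]]|Hg].
  - by have := hB _ Hi; lia.
  - by have := hA _ Hj; lia.
  - lia.
have e0 := subset_leq_card sub.
have e1 := cardsUI (Bs :|: (h @: As)) [set i : 'I_N | b.+1 <= i < a.-1].
rewrite d2 cards0 addn0 in e1.
have e2 := cardsUI Bs (h @: As); rewrite d1 cards0 addn0 in e2.
rewrite cW in e0; rewrite cG in e1; rewrite cH in e2.
lia.
Qed.

Lemma main_nat (n k : nat) (hn : (3 <= n)%N)
  (S : {set 'I_(n+k) * 'I_(n+k)}) (a1 bk2 x y : 'I_(n+k)) :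
  nat_of_ord a1 = 0%N -> nat_of_ord bk2 = k.+1 ->
  independent n k S ->
  (a1, y) \in S -> (x, bk2) \in S ->
  chain_le_lt_le (n+k) a1 y x bk2 ->
  #|Bset n k a1 S| + #|Aset n k bk2 S| + n <= k + 3.
Proof.
move=> ha1 hbk /andP[Hsub Hind] Hy Hx Hch.

have N0 : 0 < n+k by lia.
have HI : forall p, p \in S -> incomp n k p.1 p.2.
  by move=> p /(subsetP Hsub); rewrite inE.
have HJ : forall p q, p \in S -> q \in S -> ~~ adjG n k p q.
  move=> p q Hp Hq; move/forall_inP: Hind => /(_ p Hp) /forall_inP; exact.
set Bs := Bset n k a1 S. set As := Aset n k bk2 S.
have hB : forall b1 : 'I_(n+k), b1 \in Bs -> b1 <= k.
  by move=> b1; rewrite inE => /HI; rewrite /incomp /= cwd_le ?ha1 // subn0.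
have hA : forall a : 'I_(n+k), a \in As -> 1 <= a <= k.+1.
  move=> a; rewrite inE => /HI; rewrite /incomp /=.
  have aN := ltn_ord a.
  have kN : k.+1 < n+k by lia.
  case: (leqP a k.+1) => Ha.
    rewrite cwd_le ?hbk //; lia.
  rewrite cwd_gt ?hbk //; lia.
have hP : forall (b a : 'I_(n+k)), b \in Bs -> a \in As -> b < a -> n <= a - b.
  move=> b0 a0 Hb Ha Hba.
  have := HJ (a1, b0) (a0, bk2); rewrite !inE in Hb Ha.
  move=> /(_ Hb Ha); rewrite /adjG /ltAB /incomp /= cwd_le ?ha1 ?hbk //; last by lia.
  rewrite cwd_gt //; lia.
have yB : y \in Bs by rewrite inE.
have xA : x \in As by rewrite inE.
have yx : y < x.
  move: Hch; rewrite /chain_le_lt_le !cwd_le ?ha1 ?ltn_ord // !subn0; lia.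
pose P d := [exists b : 'I_(n+k), exists a : 'I_(n+k),
   [&& b \in Bs, a \in As, b < a & a - b == d]].
have exP : exists d, P d.
  exists (x - y); apply/existsP; exists y; apply/existsP; exists x.
  by rewrite yB xA yx eqxx.
case: (ex_minnP exP) => d /existsP[b /existsP[a /and4P[Hb Ha Hba /eqP Hd]]] Hmin.
have Hgap : forall (b' a' : 'I_(n+k)), b' \in Bs -> a' \in As -> b' < a' -> a - b <= a' - b'.
  move=> b' a' H1 H2 H3; rewrite Hd; apply: Hmin.
  by apply/existsP; exists b'; apply/existsP; exists a'; rewrite H1 H2 H3 eqxx.
have nab := hP b a Hb Ha Hba.
have := count_main _ _ _ _ _ _ _ hB hA Hb Ha Hba nab; apply; [lia|lia|exact: Hgap].
Qed.

Local Open Scope ring_scope.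

Theorem lemma6p6 (n k : nat) (hn : (3 <= n)%N)
  (S : {set 'I_(n+k) * 'I_(n+k)}) (a1 bk2 x y : 'I_(n+k)) :
  nat_of_ord a1 = 0%N -> nat_of_ord bk2 = k.+1 ->
  independent n k S ->
  (a1, y) \in S -> (x, bk2) \in S ->
  chain_le_lt_le (n+k) a1 y x bk2 ->
  ((#|Bset n k a1 S| + #|Aset n k bk2 S|)%N%:Z <= k%:Z + 3 - n%:Z).
Proof.
move=> h1 h2 h3 h4 h5 h6.
have := main_nat _ _ hn _ _ _ _ _ h1 h2 h3 h4 h5 h6.
lia.
Qed.
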